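(* Let $0<R_{\min}<R_{\max}$, $0<\varepsilon<1$, fix a center $c$, and define $r_i=R_{\min}(1+\frac{e\varepsilon}{4})^i$ for $i=0,1,\dots,s$, where $s$ is the least integer with $r_s\ge R_{\max}$. Then $s\le\lceil\frac{8}{e\varepsilon}\log\frac{R_{\max}}{R_{\min}}\rceil$, and for every $r\in[R_{\min},R_{\max}]$ there is an index $i$ with $|\Phi(K_{c,r_i})-\Phi(K_{c,r})|\le\varepsilon$; in particular $s=O(\frac1\varepsilon\log\frac{R_{\max}}{R_{\min}})$ bandwidths suffice.
   Context: $B\subset\mathbb{R}^d$ finite nonempty, $m:B\to\{0,1\}$, $M=\{x\in B:m(x)=1\}$. $K_{c,r}(x)=\exp(-\|x-c\|^2/r^2)$. For $p,q\in[0,1]$ and $K:B\to[0,1]$: $g(x)=pK(x)+q(1-K(x))$, $\ell(p,q,K)=\frac{1}{|B|}\big(\sum_{x\in M}\log g(x)+\sum_{x\in B\setminus M}\log(1-g(x))\big)$, $\ell_0(q)=\frac1{|B|}(|M|\log q+|B\setminus M|\log(1-q))$, $\Phi(K)=\max_{p,q\in[0,1]}\ell(p,q,K)-\max_q\ell_0(q)$. Standing assumption: for each bandwidth the maximizer $(p^*,q^* )$ is interior to $(0,1)^2$ with finite value. *)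

(* Defs.v *)
From Stdlib Require Import Reals Lra List ClassicalEpsilon.
Import ListNotations.
Open Scope R_scope.

(* Points of R^d are lists of reals of length d. *)
Definition point := list R.

Fixpoint sqdist (x c : point) : R :=
  match x, c with
  | a :: x', b :: c' => (a - b)^2 + sqdist x' c'
  | _, _ => 0
  end.

Definition Kgauss (c : point) (r : R) (x : point) : R :=
  exp (- sqdist x c / r ^ 2).

Definition gmix (p q k : R) : R := p * k + q * (1 - k).

Definition sumR (B : list point) (f : point -> R) : R :=
  fold_right (fun x acc => f x + acc) 0 B.

Definition ell (B : list point) (m : point -> bool) (K : point -> R) (p q : R) : R :=
  / INR (length B) *
  sumR B (fun x => if m x then ln (gmix p q (K x)) else ln (1 - gmix p q (K x))).

Definition ell0 (B : list point) (m : point -> bool) (q : R) : R :=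
  / INR (length B) *
  (INR (length (filter m B)) * ln q
   + INR (length (filter (fun x => negb (m x)) B)) * ln (1 - q)).

(* supremum of a set of reals (classically chosen; 0 if no lub exists) *)
Definition Rsup (E : R -> Prop) : R :=
  match excluded_middle_informative (exists l, is_lub E l) with
  | left H => proj1_sig (constructive_indefinite_description _ H)
  | right _ => 0
  end.

(* Phi(K) = max_{p,q} ell(p,q,K) - max_q ell_0(q).  The maxima are taken as
   suprema over the open parameter sets, where all logarithms are finite. *)
Definition Phi (B : list point) (m : point -> bool) (K : point -> R) : R :=
  Rsup (fun v => exists p q, 0 < p < 1 /\ 0 < q < 1 /\ v = ell B m K p q)
  - Rsup (fun v => exists q, 0 < q < 1 /\ v = ell0 B m q).

(* ceiling via Stdlib's Int_part (= floor) *)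
Definition Rceil (x : R) : Z := (- Int_part (- x))%Z.

Definition rgrid (Rmin eps : R) (i : nat) : R := Rmin * (1 + exp 1 * eps / 4) ^ i.

(* Main.v *)
Require Import Defs.
From Stdlib Require Import Reals List.
From Stdlib Require Import Lra Lia Psatz ZArith ClassicalEpsilon.
Open Scope R_scope.

Lemma ln_le' : forall x y, 0 < x -> x <= y -> ln x <= ln y.
Proof. intros x y Hx Hxy. destruct Hxy as [H|H]. left; apply ln_increasing; auto. subst; lra. Qed.

Lemma sqdist_nonneg : forall x c, 0 <= sqdist x c.
Proof.
  induction x as [|a x IH]; intros c; destruct c as [|b c]; simpl; try lra.
  specialize (IH c). pose proof (pow2_ge_0 (a-b)). lra.
Qed.

Lemma K_bounds : forall c r x, 0 < r -> 0 < Kgauss c r x <= 1.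
Proof.
  intros c r x Hr. unfold Kgauss. split. apply exp_pos.
  pose proof (sqdist_nonneg x c).
  assert (0 < r^2) by (apply pow_lt; auto).
  assert (- sqdist x c / r ^ 2 <= 0).
  { unfold Rdiv. assert (0 <= sqdist x c * / r^2).
    apply Rmult_le_pos; auto. left; apply Rinv_0_lt_compat; auto. lra. }
  destruct H1 as [H1|H1]. left. rewrite <- exp_0. apply exp_increasing; auto.
  rewrite H1, exp_0; lra.
Qed.

Lemma exp_diff : forall t g, 0 <= t -> 1 <= g ->
  0 <= exp (-t) - exp (-(g*t)) <= (g-1) * exp (-1).
Proof.
  intros t g Ht Hg.
  assert (E : exp (-(g*t)) = exp (-t) * exp (-((g-1)*t))).
  { rewrite <- exp_plus. f_equal. ring. }
  pose proof (exp_ineq1_le (-((g-1)*t))).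
  pose proof (exp_pos (-t)).
  pose proof (exp_pos (-((g-1)*t))).
  assert (Ht1 : t <= exp (t - 1)) by (pose proof (exp_ineq1_le (t-1)); lra).
  assert (Ht2 : t * exp (-t) <= exp (-1)).
  { replace (exp (-1)) with (exp (t-1) * exp (-t)).
    apply Rmult_le_compat_r; lra. rewrite <- exp_plus. f_equal. ring. }
  rewrite E. split.
  - assert (exp (-((g-1)*t)) <= 1).
    { destruct (Req_dec ((g-1)*t) 0) as [Z|Z]. rewrite Z. rewrite Ropp_0, exp_0. lra.
      left. assert (HE : exp (-((g-1)*t)) < exp 0); [|rewrite exp_0 in HE; exact HE]. apply exp_increasing.
      assert (HH : 0 <= (g-1)*t) by (apply Rmult_le_pos; lra).
      destruct HH as [HH|HH]; [lra | exfalso; apply Z; auto]. }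
    assert (exp (-t) * exp (-((g-1)*t)) <= exp (-t) * 1) by (apply Rmult_le_compat_l; lra).
    lra.
  - assert (exp (-t) * (1 - exp (- ((g - 1) * t))) <= exp (-t) * ((g-1)*t)).
    { apply Rmult_le_compat_l; lra. }
    assert (0 <= g - 1) by lra.
    assert (exp (-t) * ((g-1)*t) = (g-1) * (t * exp (-t))) by ring.
    assert ((g-1) * (t * exp (-t)) <= (g-1) * exp (-1)) by (apply Rmult_le_compat_l; lra).
    lra.
Qed.

Lemma K_cmp : forall c r1 r2 x, 0 < r1 -> r1 <= r2 ->
  0 <= Kgauss c r2 x - Kgauss c r1 x <= (r2^2/r1^2 - 1) * exp (-1).
Proof.
  intros c r1 r2 x H1 H12. unfold Kgauss.
  set (D := sqdist x c).
  assert (HD : 0 <= D) by apply sqdist_nonneg.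
  assert (0 < r2) by lra.
  assert (P1 : 0 < r1^2) by (apply pow_lt; auto).
  assert (P2 : 0 < r2^2) by (apply pow_lt; lra).
  set (t := D / r2^2). set (g := r2^2/r1^2).
  assert (Ht : 0 <= t). { unfold t, Rdiv. apply Rmult_le_pos; auto. left; apply Rinv_0_lt_compat; auto. }
  assert (Hg : 1 <= g).
  { unfold g. assert (r1^2 <= r2^2) by (simpl; nra).
    apply Rmult_le_reg_r with (r1^2); auto. unfold Rdiv. rewrite Rmult_assoc, Rinv_l; lra. }
  assert (E1 : - D / r2^2 = - t) by (unfold t, Rdiv; ring).
  assert (E2 : - D / r1^2 = - (g * t)) by (unfold g, t; field; split; lra).
  rewrite E1, E2. apply exp_diff; auto.
Qed.

Lemma gmix_bounds : forall p q k, 0 < p < 1 -> 0 < q < 1 -> 0 <= k <= 1 ->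
  0 < gmix p q k < 1.
Proof.
  intros p q k Hp Hq Hk. unfold gmix.
  replace (p * k + q * (1 - k)) with (q + (p - q) * k) by ring.
  destruct (Rle_dec p q).
  - assert (0 <= (q-p)*k) by (apply Rmult_le_pos; lra).
    assert ((q-p)*k <= q-p) by (rewrite <- (Rmult_1_r (q-p)) at 2; apply Rmult_le_compat_l; lra).
    lra.
  - assert (0 <= (p-q)*k) by (apply Rmult_le_pos; lra).
    assert ((p-q)*k <= p-q) by (rewrite <- (Rmult_1_r (p-q)) at 2; apply Rmult_le_compat_l; lra).
    lra.
Qed.

Lemma sumR_cmp : forall (l : list point) (f1 f2 : point -> R) (a : R),
  (forall x, In x l -> f1 x + a <= f2 x) ->
  sumR l f1 + INR (length l) * a <= sumR l f2.
Proof.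
  induction l as [|y l IH]; intros f1 f2 a H.
  - simpl. lra.
  - assert (H1 := H y (or_introl eq_refl)).
    assert (H2 := IH f1 f2 a (fun x Hx => H x (or_intror Hx))).
    change (sumR (y :: l) f1) with (f1 y + sumR l f1).
    change (sumR (y :: l) f2) with (f2 y + sumR l f2).
    change (length (y :: l)) with (S (length l)).
    rewrite S_INR. lra.
Qed.

Lemma avg_lemma : forall N S1 S2 c, 0 < N -> S1 + N * c <= S2 -> / N * S1 + c <= / N * S2.
Proof.
  intros N S1 S2 c HN H.
  assert (HI : 0 < / N) by (apply Rinv_0_lt_compat; auto).
  assert (/ N * (S1 + N * c) <= / N * S2) by (apply Rmult_le_compat_l; lra).
  replace (/ N * (S1 + N * c)) with (/ N * S1 + c) in H0 by (field; lra).
  lra.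
Qed.

Lemma ell_cmp : forall B m (K1 K2 : point -> R) p q th,
  B <> nil -> 0 < p < 1 -> 0 < q < 1 -> 0 < th < 1 ->
  (forall x, 0 <= K1 x <= 1) -> (forall x, 0 <= K2 x <= 1) ->
  (forall x, K1 x - K2 x <= th/2 /\ K2 x - K1 x <= th/2) ->
  ell B m K1 p q + ln (1 - th) <= ell B m K2 ((1-th)*p + th/2) ((1-th)*q + th/2).
Proof.
  intros B m K1 K2 p q th HB Hp Hq Hth HK1 HK2 HD.
  unfold ell.
  assert (HN : 0 < INR (length B)).
  { destruct B as [|b B]. congruence. simpl length. rewrite S_INR. pose proof (pos_INR (length B)). lra. }
  assert (Hs := sumR_cmp B
    (fun x => if m x then ln (gmix p q (K1 x)) else ln (1 - gmix p q (K1 x)))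
    (fun x => if m x then ln (gmix ((1-th)*p + th/2) ((1-th)*q + th/2) (K2 x))
              else ln (1 - gmix ((1-th)*p + th/2) ((1-th)*q + th/2) (K2 x)))
    (ln (1 - th))).
  assert (Hs' : sumR B
    (fun x => if m x then ln (gmix p q (K1 x)) else ln (1 - gmix p q (K1 x))) +
    INR (length B) * ln (1 - th) <= sumR B
    (fun x => if m x then ln (gmix ((1-th)*p + th/2) ((1-th)*q + th/2) (K2 x))
              else ln (1 - gmix ((1-th)*p + th/2) ((1-th)*q + th/2) (K2 x)))).
  { apply Hs. intros x _.
    pose proof (gmix_bounds p q (K1 x) Hp Hq (HK1 x)) as Hg.
    destruct (HD x) as [D1 D2]. destruct (HK1 x). destruct (HK2 x).
    set (g := gmix p q (K1 x)) in *.
    set (g' := gmix ((1-th)*p + th/2) ((1-th)*q + th/2) (K2 x)).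
    assert (Eg' : g' = (1-th) * gmix p q (K2 x) + th/2) by (unfold g', gmix; ring).
    assert (A1 : (1-th) * g <= g').
    { rewrite Eg'. unfold g, gmix.
      assert (-(th/2) <= (p-q)*(K2 x - K1 x)) by nra.
      assert (-(th/2) * (1-th) <= (1-th)*((p-q)*(K2 x - K1 x))) by nra.
      nra. }
    assert (A2 : (1-th) * (1-g) <= 1-g').
    { rewrite Eg'. unfold g, gmix.
      assert ((p-q)*(K2 x - K1 x) <= th/2) by nra.
      assert ((1-th)*((p-q)*(K2 x - K1 x)) <= th/2 * (1-th)) by nra.
      nra. }
    assert (L1 : ln (1-th) + ln g <= ln g').
    { rewrite <- ln_mult by lra. apply ln_le'; [apply Rmult_lt_0_compat|]; lra. }
    assert (L2 : ln (1-th) + ln (1-g) <= ln (1-g')).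
    { rewrite <- ln_mult by lra. apply ln_le'; [apply Rmult_lt_0_compat|]; lra. }
    destruct (m x); lra. }
  apply avg_lemma; auto.
Qed.

Definition Mset B m K := fun v => exists p q, 0 < p < 1 /\ 0 < q < 1 /\ v = ell B m K p q.

Lemma Msup_eq : forall B m K ps qs, 0 < ps < 1 -> 0 < qs < 1 ->
  (forall p q, 0 < p < 1 -> 0 < q < 1 -> ell B m K p q <= ell B m K ps qs) ->
  Rsup (Mset B m K) = ell B m K ps qs.
Proof.
  intros B m K ps qs Hp Hq Hmax.
  assert (Hl : is_lub (Mset B m K) (ell B m K ps qs)).
  { split.
    - intros v (p & q & H1 & H2 & ->). apply Hmax; auto.
    - intros b Hb. apply Hb. exists ps, qs. auto. }
  unfold Rsup. destruct (excluded_middle_informative _) as [H|H].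
  - destruct (constructive_indefinite_description _ H) as [l Hl']. simpl.
    eapply is_lub_u; eauto.
  - exfalso. apply H. eauto.
Qed.

Lemma ln_eps : forall e, 0 < e < 1 -> - e <= ln (1 - e/2).
Proof.
  intros e He.
  assert (H1 := exp_ineq1_le e).
  assert (H2 : exp (-e) <= 1 - e/2).
  { rewrite exp_Ropp. pose proof (exp_pos e).
    apply Rmult_le_reg_l with (exp e); auto. rewrite Rinv_r by lra. nra. }
  rewrite <- (ln_exp (-e)). apply ln_le'; auto. apply exp_pos.
Qed.

Lemma one_side : forall B m K1 K2 e,
  B <> nil -> 0 < e < 1 ->
  (forall x, 0 <= K1 x <= 1) -> (forall x, 0 <= K2 x <= 1) ->
  (forall x, K1 x - K2 x <= e/4 /\ K2 x - K1 x <= e/4) ->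
  (exists ps qs, 0 < ps < 1 /\ 0 < qs < 1 /\
       forall p q, 0 < p < 1 -> 0 < q < 1 -> ell B m K1 p q <= ell B m K1 ps qs) ->
  (exists ps qs, 0 < ps < 1 /\ 0 < qs < 1 /\
       forall p q, 0 < p < 1 -> 0 < q < 1 -> ell B m K2 p q <= ell B m K2 ps qs) ->
  Rsup (Mset B m K1) - e <= Rsup (Mset B m K2).
Proof.
  intros B m K1 K2 e HB He HK1 HK2 HD (p1 & q1 & Hp1 & Hq1 & Hm1) (p2 & q2 & Hp2 & Hq2 & Hm2).
  rewrite (Msup_eq B m K1 p1 q1), (Msup_eq B m K2 p2 q2); auto.
  assert (Hc := ell_cmp B m K1 K2 p1 q1 (e/2) HB Hp1 Hq1 ltac:(lra) HK1 HK2
     ltac:(intros x; destruct (HD x); split; lra)).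
  assert (Hm := Hm2 ((1 - e/2) * p1 + e/2/2) ((1 - e/2) * q1 + e/2/2) ltac:(nra) ltac:(nra)).
  pose proof (ln_eps e He). lra.
Qed.

Lemma grid_find : forall Rmin eps r n, (1 <= n)%nat ->
  rgrid Rmin eps 0 <= r <= rgrid Rmin eps n ->
  exists i, (i < n)%nat /\ rgrid Rmin eps i <= r <= rgrid Rmin eps (S i).
Proof.
  intros Rmin eps r n Hn. induction n as [|n IH]; intros Hr. lia.
  destruct (Nat.eq_dec n 0) as [->|Hn0].
  - exists 0%nat; split; auto.
  - destruct (Rle_dec r (rgrid Rmin eps n)).
    + destruct IH as (i & Hi & H). lia. lra. exists i; split; auto; lia.
    + exists n; split; [lia|lra].
Qed.

Lemma Rceil_ge : forall x, x <= IZR (Rceil x).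
Proof.
  intros x. unfold Rceil. rewrite opp_IZR.
  destruct (base_Int_part (-x)). lra.
Qed.

Lemma ln_1a : forall a, 0 < a < 1 -> a/2 <= ln (1 + a).
Proof.
  intros a Ha. rewrite <- (ln_exp (a/2)). apply ln_le'. apply exp_pos.
  assert (H := exp_ineq1_le (-(a/2))).
  assert (E : exp (a/2) * exp (-(a/2)) = 1) by (rewrite <- exp_plus; replace (a/2 + - (a/2)) with 0 by ring; apply exp_0).
  pose proof (exp_pos (a/2)).
  nra.
Qed.

Theorem mainTheorem8
  (d : nat) (B : list point) (m : point -> bool) (c : point)
  (HBne : B <> nil) (HBnd : NoDup B)
  (HBd : forall x, In x B -> length x = d) (Hcd : length c = d)
  (Hstand : forall r, 0 < r -> exists ps qs, 0 < ps < 1 /\ 0 < qs < 1 /\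
       forall p q, 0 < p < 1 -> 0 < q < 1 ->
         ell B m (Kgauss c r) p q <= ell B m (Kgauss c r) ps qs)
  (Rmin Rmax eps : R) (HRmin : 0 < Rmin) (HR : Rmin < Rmax)
  (Heps : 0 < eps < 1)
  (s : nat) (Hs : Rmax <= rgrid Rmin eps s)
  (Hsmin : forall i, (i < s)%nat -> rgrid Rmin eps i < Rmax) :
  IZR (Z.of_nat s) <= IZR (Rceil (8 / (exp 1 * eps) * ln (Rmax / Rmin))) /\
  forall r, Rmin <= r <= Rmax ->
    exists i, (i <= s)%nat /\
      Rabs (Phi B m (Kgauss c (rgrid Rmin eps i)) - Phi B m (Kgauss c r)) <= eps.
Proof.
  set (a := exp 1 * eps / 4).
  assert (He1 : 0 < exp 1) by apply exp_pos.
  assert (He3 := exp_le_3).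
  assert (Ha : 0 < a < 1) by (unfold a; split; nra).
  assert (Hgrid : forall i, rgrid Rmin eps i = Rmin * (1 + a) ^ i) by reflexivity.
  assert (Hs1 : (1 <= s)%nat).
  { destruct s. rewrite Hgrid in Hs. simpl in Hs. lra. lia. }
  split.
  - destruct s as [|n]. lia.
    assert (Hn := Hsmin n ltac:(lia)). rewrite Hgrid in Hn.
    assert (Hpow : 0 < (1 + a) ^ n) by (apply pow_lt; lra).
    assert (Hl : ln (Rmin * (1 + a) ^ n) < ln Rmax).
    { apply ln_increasing; auto. apply Rmult_lt_0_compat; auto. }
    rewrite ln_mult, ln_pow in Hl by lra.
    assert (HL : ln (Rmax / Rmin) = ln Rmax - ln Rmin).
    { unfold Rdiv. rewrite ln_mult, ln_Rinv; try lra. apply Rinv_0_lt_compat; auto. }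
    assert (H1a := ln_1a a Ha).
    assert (HINR := pos_INR n).
    assert (Hx : INR n * (a/2) < ln (Rmax / Rmin)).
    { rewrite HL. assert (INR n * (a/2) <= INR n * ln (1+a)) by (apply Rmult_le_compat_l; lra). lra. }
    assert (Ex : 8 / (exp 1 * eps) * ln (Rmax / Rmin) = ln (Rmax/Rmin) / (a/2))
      by (unfold a; field; lra).
    rewrite Ex.
    assert (Hy : INR n < ln (Rmax/Rmin) / (a/2)).
    { apply Rmult_lt_reg_r with (a/2). lra. unfold Rdiv at 2. rewrite Rmult_assoc, Rinv_l by lra. lra. }
    pose proof (Rceil_ge (ln (Rmax / Rmin) / (a / 2))).
    assert (Hz : IZR (Z.of_nat (S n)) < IZR (Rceil (ln (Rmax / Rmin) / (a / 2)) + 1)).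
    { rewrite plus_IZR, <- INR_IZR_INZ, S_INR. lra. }
    apply lt_IZR in Hz.
    apply IZR_le. lia.
  - intros r Hr.
    assert (Hpair : forall r1 r2, 0 < r1 -> r1 <= r2 -> r2^2 <= (1 + a) * r1^2 ->
       Rabs (Phi B m (Kgauss c r1) - Phi B m (Kgauss c r2)) <= eps).
    { intros r1 r2 H1 H12 H2.
      assert (EP : Phi B m (Kgauss c r1) - Phi B m (Kgauss c r2) =
                   Rsup (Mset B m (Kgauss c r1)) - Rsup (Mset B m (Kgauss c r2)))
        by (unfold Phi, Mset; ring).
      rewrite EP.
      assert (HK1 : forall x, 0 <= Kgauss c r1 x <= 1) by (intros x; pose proof (K_bounds c r1 x H1); lra).
      assert (HK2 : forall x, 0 <= Kgauss c r2 x <= 1) by (intros x; pose proof (K_bounds c r2 x ltac:(lra)); lra).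
      assert (Hq : r2^2/r1^2 - 1 <= a).
      { assert (0 < r1^2) by (apply pow_lt; auto).
        assert (r2^2/r1^2 <= ((1+a)*r1^2)/r1^2)
          by (unfold Rdiv; apply Rmult_le_compat_r; [left; apply Rinv_0_lt_compat|]; lra).
        replace (((1+a)*r1^2)/r1^2) with (1+a) in H0 by (field; lra). lra. }
      assert (Hae : a * exp (-1) = eps/4).
      { assert (E : exp 1 * exp (-1) = 1) by (rewrite <- exp_plus; replace (1 + -1) with 0 by lra; apply exp_0).
        unfold a. set (u := exp (-1)) in *. set (v := exp 1) in *.
        replace (v * eps / 4 * u) with ((v * u) * eps / 4) by field.
        rewrite E. field. }
      assert (Hem : 0 < exp (-1)) by apply exp_pos.
      assert (HD : forall x, Kgauss c r1 x - Kgauss c r2 x <= eps/4 /\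
                             Kgauss c r2 x - Kgauss c r1 x <= eps/4).
      { intros x. destruct (K_cmp c r1 r2 x H1 H12) as [D1 D2].
        assert ((r2 ^ 2 / r1 ^ 2 - 1) * exp (-1) <= a * exp (-1)) by (apply Rmult_le_compat_r; lra).
        split; lra. }
      assert (HD' : forall x, Kgauss c r2 x - Kgauss c r1 x <= eps/4 /\
                             Kgauss c r1 x - Kgauss c r2 x <= eps/4)
        by (intros x; destruct (HD x); split; lra).
      pose proof (one_side B m _ _ eps HBne Heps HK1 HK2 HD (Hstand r1 H1) (Hstand r2 ltac:(lra))).
      pose proof (one_side B m _ _ eps HBne Heps HK2 HK1 HD' (Hstand r2 ltac:(lra)) (Hstand r1 H1)).
      apply Rabs_le. lra. }
    assert (Hr0 : rgrid Rmin eps 0 <= r <= rgrid Rmin eps s).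
    { rewrite Hgrid. simpl. lra. }
    destruct (grid_find Rmin eps r s Hs1 Hr0) as (i & Hi & Hri).
    assert (HS : rgrid Rmin eps (S i) = rgrid Rmin eps i * (1 + a)) by (rewrite !Hgrid; simpl; ring).
    assert (Hpos : 0 < rgrid Rmin eps i) by (rewrite Hgrid; apply Rmult_lt_0_compat; auto; apply pow_lt; lra).
    destruct (Rle_dec (r^2) ((1 + a) * (rgrid Rmin eps i)^2)).
    + exists i. split. lia. apply Hpair; auto; lra.
    + exists (S i). split. lia. rewrite Rabs_minus_sym. apply Hpair; try lra.
      rewrite HS. simpl. simpl in n.
      assert (0 < 1 + a) by lra.
      nra.
Qed.
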